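(* Let $b\in\mathfrak{lie}_C$. Then $b$ is a push-invariant polynomial (i.e. $push(b)=b$) if and only if the mould $ma(b)$ is push-invariant.
   Context: $\mathfrak{lie}_C$ is the completed free Lie algebra over $\mathbb{Q}$ on $C_i=\mathrm{ad}(x)^{i-1}(y)$, $i\ge1$, inside $\mathbb{Q}\langle\langle x,y\rangle\rangle$; every element of $\mathfrak{lie}_C$ is uniquely a noncommutative series in the $C_i$. The push operator on words in $x,y$ is $push(x^{a_0}yx^{a_1}y\cdots yx^{a_r})=x^{a_r}yx^{a_0}y\cdots yx^{a_{r-1}}$, trivial on constants and powers of $x$, extended linearly. A mould is a family $A=(A^r)_{r\ge0}$ with $A^r$ a rational function in $u_1,\dots,u_r$; $ma$ sends a series $\sum k_{\underline a}C_{a_1}\cdots C_{a_r}$ (summed over all $r$) to the mould whose depth-$r$ component is $\sum k_{\underline a}u_1^{a_1-1}\cdots u_r^{a_r-1}$. A mould $A$ is push-invariant if $A(u_0,u_1,\dots,u_{r-1})=A(u_1,\dots,u_r)$ for all $r\ge1$, where $u_0=-u_1-\dots-u_r$. *)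

(* Defs.v *)
From HB Require Import structures.
From mathcomp Require Import all_boot all_order all_algebra.
From mathcomp Require Import mpoly.
Set Implicit Arguments. Unset Strict Implicit. Unset Printing Implicit Defensive.
Import Order.TTheory GRing.Theory Num.Theory.
Local Open Scope ring_scope.

(* A letter is a bool: false = x, true = y.  A word is a seq bool.   *)
Definition word := seq bool.

(* A noncommutative polynomial is a formal finite sum of terms c * w.
   Two such sums denote the same element of Q<x,y> iff they have the
   same coefficient function [coef]; all statements use [nc_eq]. *)
Definition ncpoly := seq (rat * word).

Definition coef (p : ncpoly) (w : word) : rat :=
  \sum_(t <- p | t.2 == w) t.1.

Definition nc_eq (p q : ncpoly) : Prop := forall w, coef p w = coef q w.

Definition nc_add (p q : ncpoly) : ncpoly := p ++ q.
Definition nc_scale (c : rat) (p : ncpoly) : ncpoly :=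
  [seq (c * t.1, t.2) | t <- p].
Definition nc_mul (p q : ncpoly) : ncpoly :=
  [seq (s.1 * t.1, s.2 ++ t.2) | s <- p, t <- q].
Definition nc_bracket (p q : ncpoly) : ncpoly :=
  nc_add (nc_mul p q) (nc_scale (-1) (nc_mul q p)).

Definition nc_one : ncpoly := [:: (1, [::])].
Definition nc_x : ncpoly := [:: (1, [:: false])].
Definition nc_y : ncpoly := [:: (1, [:: true])].

(* Cgen a = C_{a+1} = ad(x)^a (y). *)
Definition Cgen (a : nat) : ncpoly := iter a (nc_bracket nc_x) nc_y.

(* lie_C intersected with Q<x,y>: the Lie subalgebra (over Q) generated by
   the C_i, closed under the identification [nc_eq]. *)
Inductive in_lieC : ncpoly -> Prop :=
| lieC_gen a : in_lieC (Cgen a)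
| lieC_zero : in_lieC [::]
| lieC_add p q : in_lieC p -> in_lieC q -> in_lieC (nc_add p q)
| lieC_scale c p : in_lieC p -> in_lieC (nc_scale c p)
| lieC_bracket p q : in_lieC p -> in_lieC q -> in_lieC (nc_bracket p q)
| lieC_ext p q : in_lieC p -> nc_eq p q -> in_lieC q.

(* push (x^{a0} y x^{a1} y ... y x^{ar}) = x^{ar} y x^{a0} y ... y x^{a(r-1)},
   identity on words without y.  Writing w = u ++ y :: x^t (t trailing x's),
   push w = x^t ++ y :: u. *)
Definition push_word (w : word) : word :=
  let t := find id (rev w) in
  if t == size w then w
  else nseq t false ++ true :: take (size w - t - 1) w.

Definition nc_push (p : ncpoly) : ncpoly := [seq (t.1, push_word t.2) | t <- p].

(* A noncommutative polynomial in the letters C_1, C_2, ...; the letter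
   a : nat stands for C_{a+1}. *)
Definition Cpoly := seq (rat * seq nat).

Definition evalC (f : Cpoly) : ncpoly :=
  foldr nc_add [::]
    [seq nc_scale t.1 (foldr nc_mul nc_one (map Cgen t.2)) | t <- f].

(* A mould with polynomial components: depth r component in u_1..u_r,
   the variable 'X_i (i < r) standing for u_{i+1}. *)
Definition mould := forall r : nat, {mpoly rat[r]}.

(* ma: the term k * C_{a1+1} ... C_{ar+1} goes to k * u_1^{a1} ... u_r^{ar}
   in depth r. *)
Definition ma (f : Cpoly) : mould := fun r =>
  \sum_(t <- f | size t.2 == r) t.1 *: \prod_(i < r) 'X_i ^+ nth 0%N t.2 i.

(* Substitution (u_1,...,u_{r+1}) |-> (u_0, u_1, ..., u_r) in depth r+1,
   with u_0 = -u_1 - ... - u_{r+1}. *)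
Definition push_subst (r : nat) : (r.+1).-tuple {mpoly rat[r.+1]} :=
  [tuple (if (j : nat) == 0%N then - \sum_(i < r.+1) 'X_i
          else 'X_(inord (j.-1))) | j < r.+1].

Definition mould_push_invariant (A : mould) : Prop :=
  forall r : nat, comp_mpoly (push_subst r) (A r.+1) = A r.+1.

(* Main.v *)
Require Import Defs.
From HB Require Import structures.
From mathcomp Require Import all_boot all_order all_algebra.
From mathcomp Require Import mpoly.
From mathcomp Require Import zify.
Set Implicit Arguments. Unset Strict Implicit. Unset Printing Implicit Defensive.
Import Order.TTheory GRing.Theory Num.Theory.
Local Open Scope ring_scope.

Definition ycount (w : word) : nat := count id w.

Fixpoint mono (n : nat) (i : nat) (w : word) : {mpoly rat[n.+1]} :=
  match w with
  | [::] => 1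
  | false :: w' => 'X_(inord i) * mono n i w'
  | true :: w' => mono n i.+1 w'
  end.

Lemma mono_cat n i u v : mono n i (u ++ v) = mono n i u * mono n (i + ycount u) v.
Proof.
elim: u i => [|[] u IH] i /=; first by rewrite mul1r addn0.
  by rewrite IH addSnnS.
by rewrite IH mulrA.
Qed.

Definition Phi (n k i : nat) (b : ncpoly) : {mpoly rat[n.+1]} :=
  \sum_(t <- b | ycount t.2 == k) t.1 *: mono n i t.2.

Lemma Phi_nil n k i : Phi n k i [::] = 0.
Proof. by rewrite /Phi big_nil. Qed.

Lemma Phi_add n k i p q : Phi n k i (nc_add p q) = Phi n k i p + Phi n k i q.
Proof. by rewrite /Phi /nc_add big_cat. Qed.

Lemma Phi_scale n k i c p : Phi n k i (nc_scale c p) = c *: Phi n k i p.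
Proof.
rewrite /Phi /nc_scale big_map scaler_sumr; apply: eq_bigr => t _.
by rewrite scalerA.
Qed.

Lemma Phi_uniform n k i c p : all (fun t => ycount t.2 == c) p -> c != k ->
  Phi n k i p = 0.
Proof.
move=> /allP H ck; rewrite /Phi big_seq_cond big1 // => t /andP[/H /eqP ->].
by rewrite (negbTE ck).
Qed.

Lemma Phi_mul n k c i p q : all (fun t => ycount t.2 == c) p ->
  Phi n (c + k) i (nc_mul p q) = Phi n c i p * Phi n k (i + c) q.
Proof.
move=> /allP H; rewrite /Phi /nc_mul big_mkcond.
rewrite big_allpairs_dep /=.
rewrite big_distrl /= [RHS]big_mkcond big_seq [RHS]big_seq.
apply: eq_bigr => s /H /eqP Hs; rewrite Hs eqxx mulr_sumr [RHS]big_mkcond.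
apply: eq_bigr => t _ /=.
rewrite /ycount count_cat -/(ycount s.2) -/(ycount t.2) Hs eqn_add2l.
case: ifP => _ //.
by rewrite mono_cat Hs -scalerAl -scalerAr scalerA.
Qed.
Lemma all_mul c1 c2 p q : all (fun t => ycount t.2 == c1) p ->
  all (fun t => ycount t.2 == c2) q ->
  all (fun t => ycount t.2 == c1 + c2) (nc_mul p q).
Proof.
move=> /allP Hp /allP Hq; apply/allP => z /allpairsP [[s t] [/= /Hp /eqP Hs /Hq /eqP Ht ->]].
by rewrite /= /ycount count_cat -/(ycount s.2) -/(ycount t.2) Hs Ht.
Qed.

Lemma all_scale c d p : all (fun t => ycount t.2 == c) p ->
  all (fun t => ycount t.2 == c) (nc_scale d p).
Proof. by rewrite /nc_scale all_map. Qed.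

Lemma all_add c p q : all (fun t => ycount t.2 == c) p ->
  all (fun t => ycount t.2 == c) q -> all (fun t => ycount t.2 == c) (nc_add p q).
Proof. by rewrite /nc_add all_cat => -> ->. Qed.

Lemma all_Cgen a : all (fun t => ycount t.2 == 1%N) (Cgen a).
Proof.
elim: a => [|a IH] //=; rewrite /nc_bracket.
apply: all_add; first by apply: (@all_mul 0 1).
by apply: all_scale; apply: (@all_mul 1 0).
Qed.

Lemma Phi_x n i : Phi n 0 i nc_x = 'X_(inord i).
Proof. by rewrite /Phi big_cons big_nil /= scale1r mulr1 addr0. Qed.

Lemma Phi_Cgen n i a :
  Phi n 1 i (Cgen a) = ('X_(inord i) - 'X_(inord i.+1)) ^+ a.
Proof.
elim: a => [|a IH]; first by rewrite /Phi big_cons big_nil /= scale1r addr0.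
rewrite [Cgen _]/= /nc_bracket Phi_add Phi_scale.
have -> : Phi n 1 i (nc_mul nc_x (Cgen a)) = Phi n 0 i nc_x * Phi n 1 (i + 0) (Cgen a).
  by rewrite -Phi_mul.
have -> : Phi n 1 i (nc_mul (Cgen a) nc_x) = Phi n 1 i (Cgen a) * Phi n 0 (i + 1) nc_x.
  by rewrite -Phi_mul // all_Cgen.
by rewrite !Phi_x addn0 addn1 IH exprS mulrBl scaleN1r [_ * 'X_(inord i.+1)]mulrC.
Qed.

Definition prodC (l : seq nat) : ncpoly := foldr nc_mul nc_one (map Cgen l).

Lemma all_prodC l : all (fun t => ycount t.2 == size l) (prodC l).
Proof.
elim: l => [|a l IH] //=.
by apply: (@all_mul 1 (size l)) => //; apply: all_Cgen.
Qed.

Lemma Phi_prodC n l k i : Phi n k i (prodC l) =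
  (size l == k)%:R * \prod_(j < size l)
     ('X_(inord (i + j)) - 'X_(inord (i + j).+1)) ^+ nth 0%N l j.
Proof.
elim: l k i => [|a l IH] k i.
  rewrite big_ord0 mulr1 /prodC /= /Phi big_cons big_nil /=.
  by case: k => [|k] /=; rewrite ?scale1r ?addr0.
case: k => [|k].
  rewrite (@Phi_uniform _ _ _ (size (a :: l))) ?all_prodC //=.
  by rewrite mul0r.
rewrite /prodC /= (@Phi_mul n k 1 i) ?all_Cgen // Phi_Cgen -/(prodC l) IH.
rewrite big_ord_recl /= addn0 eqSS.
rewrite mulrCA; congr (_ * _); congr (_ * _).
by apply: eq_bigr => j _; rewrite /bump /= add0n addnA.
Qed.
Definition Dt (r : nat) : r.-tuple {mpoly rat[r.+1]} :=
  [tuple 'X_(inord i) - 'X_(inord i.+1) | i < r].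

Lemma Phi_evalC r f : Phi r r 0 (evalC f) = comp_mpoly (Dt r) (ma f r).
Proof.
rewrite /ma raddf_sum /= big_mkcond /=.
rewrite /evalC; elim: f => [|t f IH] /=; first by rewrite Phi_nil big_nil.
rewrite Phi_add IH big_cons; congr (_ + _).
rewrite Phi_scale -/(prodC t.2) Phi_prodC.
case: eqP => [Hs|_]; last by rewrite mul0r scaler0.
rewrite mul1r linearZ /= rmorph_prod /=; congr (_ *: _).
rewrite -(big_mkord xpredT (fun j => ('X_(inord (0 + j)) - 'X_(inord (0 + j).+1)) ^+ nth 0%N t.2 j)).
rewrite Hs big_mkord.
apply: eq_bigr => j _; rewrite rmorphXn /= comp_mpolyXU.
by rewrite -tnth_nth tnth_mktuple add0n.
Qed.
Lemma coef_cons t p w : coef (t :: p) w = (if t.2 == w then t.1 else 0) + coef p w.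
Proof. by rewrite /coef big_cons; case: ifP => _ //; rewrite add0r. Qed.

Lemma Phi_coefs n k i p (s : seq word) : uniq s -> all (fun t => t.2 \in s) p ->
  Phi n k i p = \sum_(w <- s | ycount w == k) coef p w *: mono n i w.
Proof.
move=> us; elim: p => [|t p IH] /=.
  by move=> _; rewrite Phi_nil big1 // => w _; rewrite /coef big_nil scale0r.
case/andP => ts /IH {}IH.
rewrite /Phi big_cons -/(Phi n k i p) IH.
under eq_bigr => w _ do rewrite coef_cons scalerDl.
rewrite big_split /=.
have -> : \sum_(w <- s | ycount w == k) (if t.2 == w then t.1 else 0) *: mono n i w
   = if ycount t.2 == k then t.1 *: mono n i t.2 else 0.
  rewrite big_mkcond (bigD1_seq t.2) //= eqxx big1 ?addr0 // => w.
  by move/negbTE; rewrite eq_sym => ->; rewrite scale0r if_same.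
by case: ifP => _ //; rewrite add0r.
Qed.

Lemma Phi_nc_eq n k i p q : nc_eq p q -> Phi n k i p = Phi n k i q.
Proof.
move=> E; set s := undup (map snd (p ++ q)).
have us : uniq s by apply: undup_uniq.
rewrite (@Phi_coefs _ _ _ _ s) ?(@Phi_coefs _ _ _ q s) //.
- by apply: eq_bigr => w _; rewrite E.
- apply/allP => t tq; rewrite mem_undup map_cat mem_cat; apply/orP; right.
  by apply: map_f.
- apply/allP => t tq; rewrite mem_undup map_cat mem_cat; apply/orP; left.
  by apply: map_f.
Qed.
Fixpoint mm (n i : nat) (w : word) : 'X_{1..n.+1} :=
  match w with
  | [::] => 0%MM
  | false :: w' => (U_(inord i) + mm n i w')%MM
  | true :: w' => mm n i.+1 w'
  end.

Lemma mono_mm n i w : mono n i w = 'X_[mm n i w].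
Proof.
elim: w i => [|[] w IH] i /=; first by rewrite mpolyX0.
  by rewrite IH.
by rewrite IH mpolyXD.
Qed.

Lemma mm_below n i w (j : 'I_n.+1) : (i + ycount w <= n)%N -> (j < i)%N -> mm n i w j = 0%N.
Proof.
elim: w i => [|[] w IH] i /=; first by rewrite mnm0E.
  move=> H ji; apply: IH; last by apply: ltnW.
  by move: H; rewrite /ycount /= add1n addSnnS.
move=> H ji; rewrite mnmDE mnm1E IH //.
have -> : (inord i == j :> 'I_n.+1) = false.
  apply/negbTE; apply/eqP => E; move: ji; rewrite -E inordK ?ltnn //.
  by rewrite ltnS; apply: leq_trans H; rewrite leq_addr.
done.
Qed.

Lemma mm_at n i w : (i <= n)%N -> mm n i (false :: w) (inord i) != 0%N.
Proof. by move=> H; rewrite /= mnmDE mnm1E eqxx. Qed.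

Lemma mm_inj n w w' i : ycount w = ycount w' -> (i + ycount w <= n)%N ->
  mm n i w = mm n i w' -> w = w'.
Proof.
elim: w w' i => [|b w IH] [|b' w'] i //=.
- case: b' => //= Hy Hn E.
  exfalso; have := @mm_at n i w'; rewrite /= -E mnm0E eqxx => H.
  suff /H : (i <= n)%N by [].
  by move: Hn; lia.
- case: b => //= Hy Hn E.
  exfalso; have := @mm_at n i w; rewrite /= E mnm0E eqxx => H.
  suff /H : (i <= n)%N by [].
  by move: Hn; lia.
- rewrite /ycount /=.
  case: b; case: b' => /= Hy Hn E.
  + congr (_ :: _); apply: (IH w' i.+1) => //.
    * by case: Hy.
    * by move: Hn; rewrite /ycount; lia.
  + exfalso; have := @mm_at n i w'; rewrite /= -E mm_below.
    * by rewrite eqxx => H; suff /H : (i <= n)%N by []; move: Hn; lia.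
    * by move: Hn; rewrite /ycount; lia.
    * by rewrite inordK //; move: Hn; lia.
  + exfalso; have := @mm_at n i w; rewrite /= E mm_below.
    * by rewrite eqxx => H; suff /H : (i <= n)%N by []; move: Hn; lia.
    * by move: Hn Hy; rewrite /ycount; lia.
    * by rewrite inordK //; move: Hn; lia.
  + congr (_ :: _); apply: (IH w' i) => //.
    apply/mnmP => j; move/mnmP: E => /(_ j); rewrite !mnmDE.
    by move/addnI.
Qed.
Lemma Phi_mcoeff n p w : ycount w = n -> (Phi n n 0 p)@_(mm n 0 w) = coef p w.
Proof.
move=> Hw; rewrite /Phi /coef raddf_sum /= big_mkcond [RHS]big_mkcond /=.
apply: eq_bigr => t _; case: eqP => [Ht|Ht].
  rewrite mcoeffZ mono_mm mcoeffX.
  case: eqP => [E|NE].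
    have Htw : t.2 = w.
      by apply: (@mm_inj n _ _ 0) => //; rewrite ?Ht ?Hw // add0n.
    by rewrite Htw eqxx /= mulr1.
  case: eqP => [E|_]; last by rewrite mulr0.
  by exfalso; apply: NE; rewrite E.
case: eqP => [E|//]; exfalso; apply: Ht; by rewrite E.
Qed.

Lemma nc_eq_Phi p q : nc_eq p q <-> forall r, Phi r r 0 p = Phi r r 0 q.
Proof.
split => [E r|E w]; first by apply: Phi_nc_eq.
by rewrite -(@Phi_mcoeff (ycount w)) // E Phi_mcoeff.
Qed.
Lemma word_split (w : word) : ~~ has id w \/ exists u t, w = u ++ true :: nseq t false.
Proof.
elim/last_ind: w => [|w b IH]; first by left.
case: b.
  by right; exists w, 0%N; rewrite cats1.
case: IH => [H|[u [t ->]]].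
  by left; rewrite -cats1 has_cat negb_or H.
right; exists u, t.+1.
rewrite rcons_cat /=; congr (_ ++ true :: _).
by elim: t {u} => [|t IHt] //=; rewrite IHt.
Qed.

Lemma push_nohas w : ~~ has id w -> push_word w = w.
Proof.
move=> H; rewrite /push_word.
have -> : find id (rev w) = size w.
  by apply/eqP; rewrite eqn_leq -size_rev find_size /= leqNgt -has_find has_rev.
by rewrite eqxx.
Qed.

Lemma push_split u t : push_word (u ++ true :: nseq t false) = nseq t false ++ true :: u.
Proof.
rewrite /push_word rev_cat rev_cons rev_nseq -cats1 -catA find_cat has_nseq andbF /=.
rewrite size_nseq addn0 size_cat /= size_nseq.
have -> : (t == size u + t.+1)%N = false by apply/negbTE; lia.
have -> : (size u + t.+1 - t - 1 = size u)%N by lia.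
by rewrite take_size_cat.
Qed.

Lemma ycount_push w : ycount (push_word w) = ycount w.
Proof.
case: (word_split w) => [H|[u [t ->]]]; first by rewrite push_nohas.
rewrite push_split /ycount !count_cat /= count_nseq /=; lia.
Qed.
Definition rot (r : nat) : (r.+1).-tuple {mpoly rat[r.+1]} :=
  [tuple (if (j : nat) == r then 'X_(inord 0) else 'X_(inord j.+1)) | j < r.+1].

Lemma rot_nth r (i : nat) : (i <= r)%N ->
  (rot r)`_i = (if i == r then 'X_(inord 0) else 'X_(inord i.+1)).
Proof.
move=> H; have Hi : (i < r.+1)%N by [].
by rewrite -[i]/(nat_of_ord (Ordinal Hi)) -tnth_nth tnth_mktuple.
Qed.

Lemma comp_rot_X r i : (i <= r)%N ->
  comp_mpoly (rot r) 'X_(inord i) =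
  (if i == r then 'X_(inord 0) else 'X_(inord i.+1)).
Proof. by move=> H; rewrite comp_mpolyXU inordK // rot_nth. Qed.

Lemma mono_nseq n i t : mono n i (nseq t false) = 'X_(inord i) ^+ t.
Proof. by elim: t => [|t IH] //=; rewrite IH exprS. Qed.

Lemma comp_rot_mono r i u : (i + ycount u < r)%N ->
  comp_mpoly (rot r) (mono r i u) = mono r i.+1 u.
Proof.
elim: u i => [|[] u IH] i /= H; first by rewrite comp_mpoly1.
  by rewrite IH //; move: H; rewrite /ycount /=; lia.
rewrite rmorphM /= IH // comp_rot_X; last by lia.
by have -> : (i == r) = false by apply/negbTE; lia.
Qed.

Lemma rot0 : rot 0 = [tuple 'X_i | i < 1].
Proof.
apply: eq_from_tnth => j; rewrite !tnth_mktuple.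
by rewrite (ord1 j) /=; congr 'X_(_); apply: val_inj; rewrite /= inordK.
Qed.

Lemma mono_push r w : ycount w = r ->
  mono r 0 (push_word w) = comp_mpoly (rot r) (mono r 0 w).
Proof.
case: (word_split w) => [H|[u [t ->]]].
  rewrite push_nohas // => Hr.
  have Hr0 : r = 0%N by rewrite -Hr /ycount; apply/eqP; rewrite -leqn0 leqNgt -has_count.
  by clear Hr; subst r; rewrite rot0 comp_mpoly_id.
rewrite push_split => Hr.
have Hu : (ycount u).+1 = r by rewrite -Hr /ycount count_cat /= count_nseq /=; lia.
rewrite !mono_cat /= mono_nseq add0n rmorphM /= comp_rot_mono; last by lia.
rewrite mono_nseq rmorphXn /= comp_rot_X; last by lia.
by rewrite Hu eqxx mulrC /ycount count_nseq /= mul0n.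
Qed.

Lemma Phi_push r p : Phi r r 0 (nc_push p) = comp_mpoly (rot r) (Phi r r 0 p).
Proof.
rewrite /Phi /nc_push big_map raddf_sum /=.
rewrite big_mkcond [RHS]big_mkcond; apply: eq_bigr => t _ /=.
rewrite ycount_push; case: eqP => [Ht|_] //.
by rewrite linearZ /= mono_push.
Qed.
Lemma comp_mpolyA n k l (lq : n.-tuple {mpoly rat[k]}) (lp : k.-tuple {mpoly rat[l]})
  (p : {mpoly rat[n]}) :
  comp_mpoly lp (comp_mpoly lq p) = comp_mpoly [tuple comp_mpoly lp (tnth lq i) | i < n] p.
Proof.
rewrite (comp_mpolyEX p lq) [RHS]comp_mpolyEX raddf_sum /=.
apply: eq_bigr => m _; rewrite linearZ /= !comp_mpolyX rmorph_prod /=.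
by congr (_ *: _); apply: eq_bigr => i _; rewrite rmorphXn tnth_mktuple.
Qed.

Lemma nth_mktuple_lt k n (F : nat -> {mpoly rat[k]}) (i : nat) : (i < n)%N ->
  [tuple F (j : nat) | j < n]`_i = F i.
Proof.
move=> H; rewrite -[i]/(nat_of_ord (Ordinal H)) -tnth_nth tnth_mktuple //.
Qed.

Lemma X_inord n (j : 'I_n.+1) : 'X_(inord j) = 'X_j :> {mpoly rat[n.+1]}.
Proof. by rewrite inord_val. Qed.
Definition Lt (r : nat) : (r.+1).-tuple {mpoly rat[r]} :=
  [tuple \sum_(j < r) ((i : nat) <= j)%:R *: 'X_j | i < r.+1].

Lemma LD r : [tuple comp_mpoly (Lt r) (tnth (Dt r) i) | i < r] = [tuple 'X_i | i < r].
Proof.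
apply: eq_from_tnth => i; rewrite !tnth_mktuple raddfB /= !comp_mpolyXU.
have Hi := ltn_ord i.
rewrite !inordK ?(ltnW Hi) // ?ltnS ?(ltnW Hi) //.
rewrite /Lt !(@nth_mktuple_lt _ r.+1 (fun i => \sum_(j < r) ((i <= j)%N%:R : rat) *: 'X_j)) ?ltnS ?(ltnW Hi) //.
rewrite -sumrB (bigD1 i) //= big1 ?addr0.
  by rewrite leqnn ltnn scale0r subr0 scale1r.
move=> j /negbTE Hj; rewrite -scalerBl.
have -> : (i <= j)%N = (i < j)%N.
  by rewrite leq_eqVlt; have -> : (nat_of_ord i == j) = false by rewrite eq_sym; exact: Hj.
by rewrite subrr scale0r.
Qed.
Lemma Dt_inj r (P Q : {mpoly rat[r]}) :
  comp_mpoly (Dt r) P = comp_mpoly (Dt r) Q -> P = Q.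
Proof.
move=> E; rewrite -(comp_mpoly_id P) -(comp_mpoly_id Q) -LD -!comp_mpolyA.
by rewrite E.
Qed.

Definition rotinv (r : nat) : (r.+1).-tuple {mpoly rat[r.+1]} :=
  [tuple (if (j : nat) == 0%N then 'X_(inord r) else 'X_(inord j.-1)) | j < r.+1].

Lemma comp_rotinv_X r i : (i <= r)%N ->
  comp_mpoly (rotinv r) 'X_(inord i) =
  (if i == 0%N then 'X_(inord r) else 'X_(inord i.-1)).
Proof.
move=> H; rewrite comp_mpolyXU inordK // /rotinv.
by rewrite (@nth_mktuple_lt _ r.+1 (fun j => if j == 0%N then 'X_(inord r) else 'X_(inord j.-1))).
Qed.

Lemma rot_rotinv r (P : {mpoly rat[r.+1]}) :
  comp_mpoly (rot r) (comp_mpoly (rotinv r) P) = P.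
Proof.
rewrite comp_mpolyA -[RHS]comp_mpoly_id; congr comp_mpoly.
apply: eq_from_tnth => j; rewrite !tnth_mktuple.
have Hj := ltn_ord j.
case: eqP => [Ej|Ej].
  rewrite comp_rot_X // eqxx; congr 'X_(_); apply: val_inj.
  by rewrite /= inordK // Ej.
rewrite comp_rot_X; last by move: Hj; lia.
have -> : (j.-1 == r) = false by apply/negbTE; move: Hj Ej; lia.
congr 'X_(_); apply: val_inj; rewrite /= inordK; last by move: Hj Ej; lia.
by move: Ej; lia.
Qed.

Lemma rotinv_rot r (P : {mpoly rat[r.+1]}) :
  comp_mpoly (rotinv r) (comp_mpoly (rot r) P) = P.
Proof.
rewrite comp_mpolyA -[RHS]comp_mpoly_id; congr comp_mpoly.
apply: eq_from_tnth => j; rewrite !tnth_mktuple.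
have Hj := ltn_ord j.
case: eqP => [Ej|Ej].
  rewrite comp_rotinv_X // eqxx; congr 'X_(_); apply: val_inj.
  by rewrite /= inordK // Ej.
rewrite comp_rotinv_X; last by move: Hj Ej; lia.
congr 'X_(_); apply: val_inj; rewrite /= inordK; last by move: Hj Ej; lia.
by [].
Qed.
Lemma Dt_nth r i : (i < r)%N ->
  (Dt r)`_i = 'X_(inord i) - 'X_(inord i.+1).
Proof.
by move=> H; rewrite /Dt (@nth_mktuple_lt _ r (fun j => 'X_(inord j) - 'X_(inord j.+1))).
Qed.

Lemma comp_Dt_X r (i : 'I_r) : comp_mpoly (Dt r) 'X_i = 'X_(inord i) - 'X_(inord i.+1).
Proof. by rewrite comp_mpolyXU Dt_nth. Qed.

Lemma comp_sum k l m (lq : k.-tuple {mpoly rat[l]}) (F : 'I_m -> {mpoly rat[k]}) :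
  comp_mpoly lq (\sum_(i < m) F i) = \sum_(i < m) comp_mpoly lq (F i).
Proof. exact: raddf_sum. Qed.

Lemma comp_opp k l (lq : k.-tuple {mpoly rat[l]}) (p : {mpoly rat[k]}) :
  comp_mpoly lq (- p) = - comp_mpoly lq p.
Proof. exact: raddfN. Qed.

Lemma rotinv_D r :
  [tuple comp_mpoly (rotinv r.+1) (tnth (Dt r.+1) i) | i < r.+1] =
  [tuple comp_mpoly (Dt r.+1) (tnth (push_subst r) i) | i < r.+1].
Proof.
apply: eq_from_tnth => j; rewrite !tnth_mktuple raddfB /=.
have Hj := ltn_ord j.
rewrite !comp_rotinv_X //; last by apply: ltnW.
have -> : (j.+1 == 0)%N = false by [].
have -> : (j.+1.-1)%N = j by [].
case: eqP => [Ej|Ej]; rewrite ?ifT // ?ifF //.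
  rewrite comp_opp comp_sum.
  under eq_bigr => i _ do rewrite comp_mpolyXU Dt_nth //.
  set f := fun k : nat => ('X_(inord k) : {mpoly rat[r.+2]}).
  rewrite -(big_mkord xpredT (fun i => f i - f i.+1)).
  have := telescope_sumr f (leq0n r.+1) => T.
  rewrite -[RHS]opprK -sumrN.
  under eq_bigr => i _ do rewrite opprB.
  by rewrite T opprB Ej opprB.
rewrite comp_mpolyXU inordK ?Dt_nth; try by move: Hj Ej; lia.
by rewrite prednK // lt0n; apply/eqP.
Qed.
Lemma key s (A : {mpoly rat[s.+1]}) :
  comp_mpoly (rotinv s.+1) (comp_mpoly (Dt s.+1) A) =
  comp_mpoly (Dt s.+1) (comp_mpoly (push_subst s) A).
Proof. by rewrite !comp_mpolyA rotinv_D. Qed.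

Unset Implicit Arguments.
Theorem proposition12 (b : ncpoly) (f : Cpoly) :
  in_lieC b -> nc_eq (evalC f) b ->
  (nc_eq (nc_push b) b <-> mould_push_invariant (ma f)).
Proof.
move=> _ Hf.
have HP : forall r, Phi r r 0 b = comp_mpoly (Dt r) (ma f r).
  by move=> r; rewrite -(Phi_nc_eq _ _ _ Hf) Phi_evalC.
rewrite nc_eq_Phi; split.
- move=> H s; apply: Dt_inj; rewrite -key.
  have := H s.+1; rewrite Phi_push HP => E.
  by rewrite -{1}E rotinv_rot.
- move=> H [|s]; rewrite Phi_push HP.
    by rewrite rot0 comp_mpoly_id.
  have E : comp_mpoly (Dt s.+1) (ma f s.+1) =
           comp_mpoly (rotinv s.+1) (comp_mpoly (Dt s.+1) (ma f s.+1)).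
    by rewrite key H.
  by rewrite {1}E rot_rotinv.
Qed.
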